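(* Let $(e_i)_{i\in\omega}$ be a sequence of events with $<_0$, $\mathrm{Add},\mathrm{Rem},\mathrm{Cnt}$, $\mathrm{val}$, $\chi$ as in the context. Then: (1) If there is a sequence of finite sets $(D_i)_{i\in\omega}$, $D_i\subseteq\mathbb N$, witnessing the state-based specification, then there is a function $\gamma$ on the $\mathrm{Op}^1$ events of the sequence satisfying FS0, FS1 and FS2. (2) If there is a function $\gamma$ on the $\mathrm{Op}^1$ events of the sequence satisfying FS0, FS1 and FS2, then there is a sequence of finite sets $(D_i)_{i\in\omega}$, $D_i\subseteq\mathbb N$, with $D_0=\emptyset$ such that every triple $(D_i,e_i,D_{i+1})$ is correct in the sense of the table in the context.
   Context: Setting: an infinite sequence of events $(e_i)_{i\in\omega}$, linearly ordered by $<_0$ where $e_i<_0e_j$ iff $i<j$. Three unary predicates $\mathrm{Add},\mathrm{Rem},\mathrm{Cnt}$ partition the events. Each event $a$ has a key $\mathrm{val}(a)\in\mathbb N$ and a status $\chi(a)\in\{0,1,f\}$, with $\chi(a)\in\{0,1\}$ whenever $\mathrm{Cnt}(a)$. Notation: for $p\in\{0,1,f\}$, $\mathrm{Add}^p(a)$ abbreviates $\mathrm{Add}(a)\wedge\chi(a)=p$, and $\mathrm{Rem}^p(a)$ similarly; $\mathrm{Cnt}^p$ similarly for $p\in\{0,1\}$; for $p\in\{0,1\}$, $\mathrm{Op}^p(a)$ abbreviates $(\mathrm{Add}(a)\vee\mathrm{Rem}(a)\vee\mathrm{Cnt}(a))\wedge\chi(a)=p$. State-based specification: a sequence $(D_i)_{i\in\omega}$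 of finite subsets of $\mathbb N$ witnesses it if $D_0=\emptyset$ and for every $i$ the triple $(D,a,D')=(D_i,e_i,D_{i+1})$, with $x=\mathrm{val}(a)$, is correct, meaning: if $\chi(a)=f$ then $D'=D$; if $\mathrm{Add}^0(a)$ then $x\notin D$ and $D'=D\cup\{x\}$; if $\mathrm{Add}^1(a)$ then $x\in D$ and $D'=D$; if $\mathrm{Rem}^0(a)$ then $x\notin D$ and $D'=D$; if $\mathrm{Rem}^1(a)$ then $x\in D$ and $D'=D\setminus\{x\}$; if $\mathrm{Cnt}^0(a)$ then $x\notin D$ and $D'=D$; if $\mathrm{Cnt}^1(a)$ then $x\in D$ and $D'=D$. Functional specification (properties of a function $\gamma$): FS0: $<_0$ is a linear ordering of the events; $\mathrm{Add},\mathrm{Rem},\mathrm{Cnt}$ are pairwise disjoint; $\gamma$ is defined on the set of $\mathrm{Op}^1$ events and its values are $\mathrm{Add}^0$ events. FS1: for every event $a$ with $\mathrm{Op}^1(a)$: $\gamma(a)<_0 a$, $\mathrm{Add}^0(\gamma(a))$, $\mathrm{val}(a)=\mathrm{val}(\gamma(a))$, and there is no event $r$ with $\mathrm{Rem}^1(r)$, $\gamma(r)=\gamma(a)$ and $\gamma(a)<_0 r<_0 a$. FS2: for all events $a<_0 b$ with $\mathrm{Add}^0(a)$ and $\mathrm{Op}^0(b)$: if $\mathrm{val}(a)=\mathrm{val}(b)$ then there is an event $r$ with $a<_0 r<_0 b$, $\mathrm{Rem}^1(r)$ and $a=\gamma(r)$. *)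

(* Defs.v *)
From HB Require Import structures.
From mathcomp Require Import all_boot finmap.
Set Implicit Arguments. Unset Strict Implicit. Unset Printing Implicit Defensive.
Local Open Scope fset_scope.

(* Events are e_i, identified with their index i : nat; e_i <_0 e_j iff i < j. *)
Inductive kind := Add | Rem | Cnt.
Inductive status := S0 | S1 | Sf.

Section Events.
Variables (knd : nat -> kind) (chi : nat -> status) (val : nat -> nat).

Definition IsAdd a := knd a = Add.
Definition IsRem a := knd a = Rem.
Definition IsCnt a := knd a = Cnt.
Definition Add0 a := IsAdd a /\ chi a = S0.
Definition Add1 a := IsAdd a /\ chi a = S1.
Definition Rem0 a := IsRem a /\ chi a = S0.
Definition Rem1 a := IsRem a /\ chi a = S1.
Definition Cnt0 a := IsCnt a /\ chi a = S0.
Definition Cnt1 a := IsCnt a /\ chi a = S1.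
Definition Op0 a := (IsAdd a \/ IsRem a \/ IsCnt a) /\ chi a = S0.
Definition Op1 a := (IsAdd a \/ IsRem a \/ IsCnt a) /\ chi a = S1.

Definition correct (D : {fset nat}) (a : nat) (D' : {fset nat}) : Prop :=
  let x := val a in
  (chi a = Sf -> D' = D) /\
  (Add0 a -> x \notin D /\ D' = x |` D) /\
  (Add1 a -> x \in D /\ D' = D) /\
  (Rem0 a -> x \notin D /\ D' = D) /\
  (Rem1 a -> x \in D /\ D' = D `\ x) /\
  (Cnt0 a -> x \notin D /\ D' = D) /\
  (Cnt1 a -> x \in D /\ D' = D).

Definition witnesses (Ds : nat -> {fset nat}) : Prop :=
  Ds 0 = fset0 /\ forall i, correct (Ds i) i (Ds i.+1).

(* gamma is represented as a total function nat -> nat; only its values on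
   Op^1 events are relevant. FS0: the linear order and the disjointness of
   Add, Rem, Cnt hold by construction; gamma maps Op^1 events to Add^0 events. *)
Definition FS0 (gamma : nat -> nat) : Prop :=
  forall a, Op1 a -> Add0 (gamma a).

Definition FS1 (gamma : nat -> nat) : Prop :=
  forall a, Op1 a ->
    [/\ gamma a < a, Add0 (gamma a), val a = val (gamma a) &
        ~ exists r, [/\ Rem1 r, Op1 r, gamma r = gamma a, gamma a < r & r < a]].

Definition FS2 (gamma : nat -> nat) : Prop :=
  forall a b, a < b -> Add0 a -> Op0 b -> val a = val b ->
    exists r, [/\ a < r, r < b, Rem1 r, Op1 r & a = gamma r].

End Events.

(* Main.v *)
Require Import Defs.
From mathcomp Require Import all_boot finmap.
From Stdlib Require Import Classical.
From mathcomp Require Import zify.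
Set Implicit Arguments. Unset Strict Implicit. Unset Printing Implicit Defensive.
Local Open Scope fset_scope.

Section Aux.
Variables (knd : nat -> kind) (chi : nat -> status) (val : nat -> nat).

Definition step (D : {fset nat}) a : {fset nat} :=
  match knd a, chi a with
  | Add, S0 => val a |` D
  | Rem, S1 => D `\ val a
  | _, _ => D end.

Fixpoint DD n : {fset nat} := match n with 0 => fset0 | n'.+1 => step (DD n') n' end.

Definition isA0 a : bool := match knd a, chi a with Add, S0 => true | _, _ => false end.

Lemma isA0P a : isA0 a = true <-> Add0 knd chi a.
Proof. rewrite /isA0 /Add0 /IsAdd; case: (knd a); case: (chi a); intuition congruence. Qed.

Definition pred_ x i := exists g, [/\ g < i, Add0 knd chi g, val g = x &
   forall r, g < r -> r < i -> Rem1 knd chi r -> val r <> x].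

Lemma extend x i : pred_ x i -> ~ (Rem1 knd chi i /\ val i = x) -> pred_ x i.+1.
Proof.
move=> [g [H1 H2 H3 H4]] Hn; exists g; split => //; first by apply: ltnW.
move=> r Hgr Hri Hr; rewrite ltnS leq_eqVlt in Hri; case/orP: Hri => [/eqP Eri|Hri].
- by subst r => Hv; apply: Hn.
- exact: H4.
Qed.

Lemma restrict x i : pred_ x i.+1 -> ~ (Add0 knd chi i /\ val i = x) -> pred_ x i.
Proof.
move=> [g [H1 H2 H3 H4]] Hn; exists g.
rewrite ltnS leq_eqVlt in H1; case/orP: H1 => [/eqP Hg|H1].
  by exfalso; apply: Hn; subst g.
split => // r Hgr Hri; apply: H4 => //; exact: ltnW.
Qed.

Lemma pred_Rem x i : pred_ x i.+1 -> Rem1 knd chi i -> val i <> x.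
Proof.
move=> [g [H1 H2 H3 H4]] HR.
rewrite ltnS leq_eqVlt in H1; case/orP: H1 => [/eqP Hg|H1].
  subst g; move: H2 HR; rewrite /Add0 /Rem1 /IsAdd /IsRem; intuition congruence.
by apply: H4.
Qed.

Lemma inv (Ds : nat -> {fset nat}) : Ds 0 = fset0 -> (forall i, Ds i.+1 = step (Ds i) i) ->
  forall i x, x \in Ds i <-> pred_ x i.
Proof.
move=> H0 HS; elim => [|i IH] x.
  rewrite H0 in_fset0; split => // [[g [H1 _ _ _]]] //.
rewrite HS /step.
have NR : Rem1 knd chi i -> ~ Add0 knd chi i.
  rewrite /Add0 /Rem1 /IsAdd /IsRem; intuition congruence.
have gen : ~ Add0 knd chi i -> ~ Rem1 knd chi i -> (x \in Ds i <-> pred_ x i.+1).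
  move=> HA HR; rewrite IH; split => H.
  - by apply: extend => // [[]].
  - by apply: restrict => // [[]].
have caseA : Add0 knd chi i -> (x \in val i |` Ds i <-> pred_ x i.+1).
  move=> HA; rewrite in_fset1U; case: eqP => [->|Hne] /=.
    split => // _; exists i; split => // r Hr1 Hr2; exfalso; move: Hr1 Hr2; clear; lia.
  rewrite /= IH; split => H.
  - apply: extend => // [[HR _]]; exact: NR HR HA.
  - apply: restrict => // [[_ Hv]]; exact: Hne.
have caseR : Rem1 knd chi i -> (x \in Ds i `\ val i <-> pred_ x i.+1).
  move=> HR; rewrite in_fsetD1; split.
  - case/andP => /eqP Hne /IH H; apply: extend => // [[_ Hv]]; exact: Hne.
  - move=> H; apply/andP; split.
    + apply/eqP => Hv; exact: pred_Rem H HR (esym Hv).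
    + apply/IH; apply: restrict => // [[HA _]]; exact: NR HR HA.
move: gen caseA caseR NR; rewrite /Add0 /Rem1 /IsAdd /IsRem.
case: (knd i); case: (chi i); intuition congruence.
Qed.

Fixpoint la (x n : nat) : nat := match n with 0 => 0
  | n'.+1 => if isA0 n' && (val n' == x) then n' else la x n' end.

Lemma la_spec n x g : g < n -> Add0 knd chi g -> val g = x ->
  [/\ g <= la x n, la x n < n, Add0 knd chi (la x n) & val (la x n) = x].
Proof.
elim: n g => [|n IH] g //= Hg HA Hv.
case E: (isA0 n && (val n == x)).
  case/andP: E => /isA0P HA' /eqP Hv'; split => //; by rewrite -ltnS.
rewrite ltnS leq_eqVlt in Hg; case/orP: Hg => [/eqP Hg|Hg].
  subst g; move/isA0P: HA => HA; by rewrite HA Hv eqxx in E.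
case: (IH g Hg HA Hv) => *; split => //; exact: ltnW.
Qed.

Lemma pred_la x i : pred_ x i -> let g := la x i in
  [/\ g < i, Add0 knd chi g, val g = x &
   forall r, g < r -> r < i -> Rem1 knd chi r -> val r <> x].
Proof.
move=> [g [H1 H2 H3 H4]] /=; case: (la_spec H1 H2 H3) => Hle Hl HA Hv.
split => // r Hr1 Hr2; apply: H4 => //; exact: leq_ltn_trans Hle Hr1.
Qed.

Lemma ex_min (P : nat -> Prop) : (exists n, P n) -> exists n, P n /\ forall m, m < n -> ~ P m.
Proof.
move=> [n Hn]; apply: NNPP => Hno.
have : forall k m, m <= k -> ~ P m.
  elim => [|k IH] m Hm HP.
    apply: Hno; exists m; split => // m' Hm'; move: Hm Hm'; clear; lia.
  rewrite leq_eqVlt in Hm; case/orP: Hm => [/eqP Hm|Hm]; last by apply: (IH m).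
  subst m; apply: Hno; exists k.+1; split => // m' Hm'; apply: IH; by rewrite -ltnS.
by move=> /(_ n n (leqnn n)).
Qed.

End Aux.

Lemma Op1E (knd : nat -> kind) (chi : nat -> status) a : Op1 knd chi a <-> chi a = S1.
Proof. rewrite /Op1 /IsAdd /IsRem /IsCnt; case: (knd a); intuition. Qed.
Lemma Op0E (knd : nat -> kind) (chi : nat -> status) a : Op0 knd chi a <-> chi a = S0.
Proof. rewrite /Op0 /IsAdd /IsRem /IsCnt; case: (knd a); intuition. Qed.


Lemma wit_step knd chi val Ds : witnesses knd chi val Ds ->
  forall i, Ds i.+1 = step knd chi val (Ds i) i.
Proof.
move=> [_ H] i; case: (H i) => [C1 [C2 [C3 [C4 [C5 [C6 C7]]]]]].
move: C1 C2 C3 C4 C5 C6 C7; rewrite /step /Add0 /Add1 /Rem0 /Rem1 /Cnt0 /Cnt1 /IsAdd /IsRem /IsCnt.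
case: (knd i); case: (chi i); intuition.
Qed.

Theorem theorem2p3 (knd : nat -> kind) (chi : nat -> status) (val : nat -> nat) :
  (forall a, IsCnt knd a -> chi a <> Sf) ->
  ((exists Ds : nat -> {fset nat}, witnesses knd chi val Ds) ->
     exists gamma : nat -> nat,
       [/\ FS0 knd chi gamma, FS1 knd chi val gamma & FS2 knd chi val gamma]) /\
  ((exists gamma : nat -> nat,
       [/\ FS0 knd chi gamma, FS1 knd chi val gamma & FS2 knd chi val gamma]) ->
     exists Ds : nat -> {fset nat}, witnesses knd chi val Ds).
Proof.
move=> _; split.
- move=> [Ds HW]; have HS := wit_step HW; have Inv := inv HW.1 HS.
  have mem1 : forall a, chi a = S1 -> pred_ knd chi val (val a) a.
    move=> a Ha; apply/Inv; case: (HW.2 a) => [C1 [C2 [C3 [C4 [C5 [C6 C7]]]]]].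
    move: C3 C5 C7; rewrite /Add1 /Rem1 /Cnt1 /IsAdd /IsRem /IsCnt Ha.
    case: (knd a); intuition.
  have nmem0 : forall a, chi a = S0 -> ~ pred_ knd chi val (val a) a.
    move=> a Ha /Inv Hin.
    suff : val a \notin Ds a by rewrite Hin.
    case: (HW.2 a) => [C1 [C2 [C3 [C4 [C5 [C6 C7]]]]]].
    move: C2 C4 C6; rewrite /Add0 /Rem0 /Cnt0 /IsAdd /IsRem /IsCnt Ha.
    case: (knd a); intuition.
  set gamma := fun a => la knd chi val (val a) a.
  have HF1 : FS1 knd chi val gamma.
    move=> a /Op1E Hop; case: (pred_la (mem1 a Hop)) => H1 H2 H3 H4.
    rewrite /gamma /=; split => //.
    move=> [r [Hr Hr' Hg Hlt Hra]]; apply: (H4 r) => //.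
    case: (pred_la (mem1 r (proj1 (Op1E _ _ r) Hr'))) => _ _ H3' _.
    by rewrite -H3' Hg.
  exists gamma; split => //.
    by move=> a Ha; case: (HF1 a Ha).
  move=> a b Hab HA /Op0E Hb Hv.
  have [r0 Hr0] : exists r, [/\ a < r, r < b, Rem1 knd chi r & val r = val a].
    apply: NNPP => Hno; apply: (nmem0 b Hb); exists a; split => // r H1 H2 H3 H4.
    by apply: Hno; exists r; split => //; rewrite Hv.
  case: (ex_min (P := fun r => [/\ a < r, r < b, Rem1 knd chi r & val r = val a]) (ex_intro _ r0 Hr0)).
  move=> r [[H1 H2 H3 H4] Hmin].
  have Hop : Op1 knd chi r by apply/Op1E; case: H3.
  exists r; split => //.
  case: (la_spec H1 HA (esym H4)) => Hle Hl HA' Hv'.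
  rewrite /gamma /=; apply/eqP; rewrite eq_sym eqn_leq Hle andbT leqNgt; apply/negP => Hlt.
  apply: (nmem0 (la knd chi val (val r) r)); first by case: HA'.
  exists a; split => //; first by rewrite Hv' H4.
  move=> r' Hr1 Hr2 HR Hvr; apply: (Hmin r'); first by apply: ltn_trans Hr2 Hl.
  split => //; first by apply: ltn_trans Hr2 (ltn_trans Hl H2).
  by rewrite Hvr Hv' H4.
- move=> [gamma [F0 F1 F2]]; exists (DD knd chi val).
  have Inv := inv (Ds := DD knd chi val) erefl (fun i => erefl).
  have mem1 : forall a, chi a = S1 -> pred_ knd chi val (val a) a.
    move=> a Ha; have Hop : Op1 knd chi a by apply/Op1E.
    case: (F1 a Hop) => H1 H2 H3 H4.
    exists (gamma a); split => // r Hr1 Hr2 HR Hvr.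
    have HopR : Op1 knd chi r by apply/Op1E; case: HR.
    case: (F1 r HopR) => G1 G2 G3 G4.
    have Hvv : val (gamma r) = val (gamma a) by rewrite -G3 -H3.
    case: (ltngtP (gamma r) (gamma a)) => Hc.
    + case: (F2 _ _ Hc G2 (proj2 (Op0E _ _ _) (proj2 H2)) Hvv) => r' [K1 K2 K3 K4 K5].
      apply: G4; exists r'; split => //; first [by rewrite K5 | exact: ltn_trans K2 Hr1].
    + case: (F2 _ _ Hc H2 (proj2 (Op0E _ _ _) (proj2 G2)) (esym Hvv)) => r' [K1 K2 K3 K4 K5].
      apply: H4; exists r'; split => //; first [by rewrite K5 | exact: ltn_trans K2 (ltn_trans G1 Hr2)].
    + by apply: H4; exists r; split.
  have nmem0 : forall a, chi a = S0 -> ~ pred_ knd chi val (val a) a.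
    move=> a Ha [g [H1 H2 H3 H4]].
    case: (F2 g a H1 H2 (proj2 (Op0E _ _ _) Ha) H3) => r [K1 K2 K3 K4 K5].
    apply: (H4 r K1 K2 K3); case: (F1 r K4) => _ _ ->; by rewrite -K5.
  split => // i.
  have M1 : chi i = S1 -> val i \in DD knd chi val i by move=> h; apply/Inv; apply: mem1.
  have M0 : chi i = S0 -> val i \notin DD knd chi val i.
    by move=> h; apply/negP => /Inv; apply: nmem0.
  move: M1 M0; rewrite /correct /= /step /Add0 /Add1 /Rem0 /Rem1 /Cnt0 /Cnt1 /IsAdd /IsRem /IsCnt.
  case: (knd i); case: (chi i); intuition congruence.
Qed.
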